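(* Let $\mathcal{U}$ be a $Sob$ effect algebra on a complex Hilbert space $H$. Then $\mathcal{U}$ is convex if and only if $A\in\mathcal{U}$ and $0\le\lambda\le1$ imply $\lambda A\in\mathcal{U}$.
   Context: $\mathcal{E}(H)$ is the set of effects ($0\le a\le I$). A sub-observable with outcome space $(\Omega,\mathcal{F})$ is a map $\mathcal{F}\to\mathcal{E}(H)$ countably additive in the strong operator topology; it is an observable if its value on $\Omega$ is $I$; $Sob(H)$ is the set of sub-observables, with pointwise linear operations. A subset $\mathcal{U}\subseteq Sob(H)$ all of whose elements have the same outcome space is a $Sob$ effect algebra if: (S1) there is an observable $Z\in\mathcal{U}$; (S2) $A\in\mathcal{U}$ implies $Z-A\in\mathcal{U}$; (S3) $A,B\in\mathcal{U}$ and $A+B\in Sob(H)$ imply $A+B\in\mathcal{U}$. A subset $\mathcal{V}\subseteq Sob(H)$ is convex if whenever $A_i\in\mathcal{V}$, $0\le\lambda_i\le1$ ($i=1,\dots,n$) and $\sum_{i=1}^n\lambda_i=1$, we have $\sum_{i=1}^n\lambda_iA_i\in\mathcal{V}$. *)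

(* Defs.v *)
From HB Require Import structures.
From mathcomp Require Import all_boot all_order all_algebra.
From mathcomp Require Import complex.
From mathcomp Require Import classical_sets boolp reals measure.
Set Implicit Arguments. Unset Strict Implicit. Unset Printing Implicit Defensive.
Import Order.TTheory GRing.Theory Num.Theory.
Local Open Scope ring_scope.
Local Open Scope classical_set_scope.
Local Open Scope complex_scope.

Section Hilbert.
Variables (R : realType) (H : lmodType R[i]) (ip : H -> H -> R[i]).

Definition hnorm (x : H) : R := Num.sqrt (complex.Re (ip x x)).

Definition hconv (u : nat -> H) (l : H) : Prop :=
  forall e : R, 0 < e -> exists N : nat, forall n, (N <= n)%N -> hnorm (u n - l) < e.
Definition hcauchy (u : nat -> H) : Prop :=
  forall e : R, 0 < e -> exists N : nat, forall m n, (N <= m)%N -> (N <= n)%N ->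
    hnorm (u m - u n) < e.

Record is_hilbert : Prop := IsHilbert {
  ip_linear : forall (a : R[i]) (x y z : H), ip (a *: x + y) z = a * ip x z + ip y z;
  ip_conj : forall x y : H, ip y x = conjc (ip x y);
  ip_ge0 : forall x : H, 0 <= ip x x;
  ip_eq0 : forall x : H, ip x x = 0 -> x = 0;
  ip_complete : forall u : nat -> H, hcauchy u -> exists l, hconv u l }.

Definition is_bounded_op (a : H -> H) : Prop :=
  (forall (c : R[i]) (x y : H), a (c *: x + y) = c *: a x + a y) /\
  exists M : R, forall x, hnorm (a x) <= M * hnorm x.

(* effects: self-adjoint bounded operators with 0 <= a <= I *)
Definition is_effect (a : H -> H) : Prop :=
  is_bounded_op a /\ (forall x y, ip (a x) y = ip x (a y)) /\
  (forall x, 0 <= ip (a x) x) /\ (forall x, 0 <= ip (x - a x) x).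

Variables (d : measure_display) (Omega : measurableType d).

Definition mset := {E : set Omega | measurable E}.

Definition opfun := mset -> H -> H.

Definition opadd (A B : opfun) : opfun := fun E x => A E x + B E x.
Definition opsub (A B : opfun) : opfun := fun E x => A E x - B E x.
Definition opscale (l : R) (A : opfun) : opfun := fun E x => l%:C *: A E x.
Definition opsum (n : nat) (l : 'I_n -> R) (A : 'I_n -> opfun) : opfun :=
  fun E x => \sum_(i < n) (l i)%:C *: A i E x.

(* sub-observables: effect-valued, countably additive in the strong operator
   topology *)
Definition is_sob (A : opfun) : Prop :=
  (forall E, is_effect (A E)) /\
  (forall (F : nat -> mset) (G : mset),
     trivIset setT (fun n => proj1_sig (F n)) ->
     proj1_sig G = \bigcup_n proj1_sig (F n) ->
     forall x : H, hconv (fun n => \sum_(k < n) A (F k) x) (A G x)).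

Definition is_observable (A : opfun) : Prop :=
  is_sob A /\ forall E : mset, proj1_sig E = setT -> forall x, A E x = x.

(* Sob effect algebras (conditions S1-S3) *)
Definition sob_effect_algebra (U : set opfun) : Prop :=
  (forall A, U A -> is_sob A) /\
  (exists Z, U Z /\ is_observable Z /\ (forall A, U A -> U (opsub Z A))) /\
  (forall A B, U A -> U B -> is_sob (opadd A B) -> U (opadd A B)).

Definition convex_sob (U : set opfun) : Prop :=
  forall (n : nat) (A : 'I_n -> opfun) (l : 'I_n -> R),
    (forall i, U (A i)) -> (forall i, 0 <= l i <= 1) -> \sum_(i < n) l i = 1 ->
    U (opsum l A).

End Hilbert.

(* Main.v *)
Require Import Defs.
From HB Require Import structures.
From mathcomp Require Import all_boot all_order all_algebra.
From mathcomp Require Import complex.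
From mathcomp Require Import classical_sets boolp reals measure.
From mathcomp Require Import ring lra.
Import Order.TTheory GRing.Theory Num.Theory.
Local Open Scope ring_scope.
Local Open Scope classical_set_scope.
Local Open Scope complex_scope.
Set Implicit Arguments. Unset Strict Implicit.

Lemma ipD (R : realType) (H : lmodType R[i]) (ip : H -> H -> R[i])
  (hH : is_hilbert ip) x y z : ip (x + y) z = ip x z + ip y z.
Proof. by rewrite -[x in LHS]scale1r (ip_linear hH) mul1r. Qed.

Lemma ip0l (R : realType) (H : lmodType R[i]) (ip : H -> H -> R[i])
  (hH : is_hilbert ip) z : ip 0 z = 0.
Proof. by apply: (addrI (ip 0 z)); rewrite addr0 -(ipD hH) addr0. Qed.

Lemma ipZ (R : realType) (H : lmodType R[i]) (ip : H -> H -> R[i])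
  (hH : is_hilbert ip) c x z : ip (c *: x) z = c * ip x z.
Proof. by rewrite -[c *: x]addr0 (ip_linear hH) (ip0l hH) addr0. Qed.

Lemma ipN (R : realType) (H : lmodType R[i]) (ip : H -> H -> R[i])
  (hH : is_hilbert ip) x z : ip (- x) z = - ip x z.
Proof. by rewrite -scaleN1r (ipZ hH) mulN1r. Qed.

Lemma ipDr (R : realType) (H : lmodType R[i]) (ip : H -> H -> R[i])
  (hH : is_hilbert ip) x y z : ip z (x + y) = ip z x + ip z y.
Proof. by rewrite (ip_conj hH) (ipD hH) rmorphD /= -!(ip_conj hH). Qed.

Lemma ipNr (R : realType) (H : lmodType R[i]) (ip : H -> H -> R[i])
  (hH : is_hilbert ip) x z : ip z (- x) = - ip z x.
Proof. by rewrite (ip_conj hH) (ipN hH) rmorphN /= -!(ip_conj hH). Qed.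

Lemma ipZr (R : realType) (H : lmodType R[i]) (ip : H -> H -> R[i])
  (hH : is_hilbert ip) c x z : ip z (c *: x) = conjc c * ip z x.
Proof. by rewrite (ip_conj hH) (ipZ hH) rmorphM /= -!(ip_conj hH). Qed.

Lemma hnorm_ge0 (R : realType) (H : lmodType R[i]) (ip : H -> H -> R[i]) x :
  0 <= hnorm ip x.
Proof. exact: sqrtr_ge0. Qed.

Lemma ipvv (R : realType) (H : lmodType R[i]) (ip : H -> H -> R[i])
  (hH : is_hilbert ip) x : ip x x = ((hnorm ip x) ^+ 2)%:C.
Proof.
have h := ip_ge0 hH x.
have hr : 0 <= complex.Re (ip x x) by move: h; rewrite lecE => /andP[].
by rewrite /hnorm sqr_sqrtr // RRe_real // ger0_real.
Qed.

Lemma hn0 (R : realType) (H : lmodType R[i]) (ip : H -> H -> R[i])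
  (hH : is_hilbert ip) : hnorm ip 0 = 0.
Proof. by rewrite /hnorm (ip0l hH) /= sqrtr0. Qed.

Lemma hnZ (R : realType) (H : lmodType R[i]) (ip : H -> H -> R[i])
  (hH : is_hilbert ip) (l : R) x : hnorm ip (l%:C *: x) = `|l| * hnorm ip x.
Proof.
have e : ((hnorm ip (l%:C *: x)) ^+ 2)%:C = ((`|l| * hnorm ip x) ^+ 2)%:C.
  rewrite -(ipvv hH) (ipZ hH) (ipZr hH) conjc_real (ipvv hH).
  rewrite exprMn real_normK ?num_real // !rmorphM /=; ring.
move/complexI: e => e.
by apply/eqP; rewrite -(@eqrXn2 _ 2) ?e ?hnorm_ge0 ?mulr_ge0 ?normr_ge0 ?hnorm_ge0.
Qed.

Lemma hnD (R : realType) (H : lmodType R[i]) (ip : H -> H -> R[i])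
  (hH : is_hilbert ip) x y : hnorm ip (x + y) <= 2 * (hnorm ip x + hnorm ip y).
Proof.
have e : ((hnorm ip (x + y)) ^+ 2)%:C + ((hnorm ip (x - y)) ^+ 2)%:C
   = (2 * (hnorm ip x) ^+ 2 + 2 * (hnorm ip y) ^+ 2)%:C.
  rewrite -!(ipvv hH) !(ipD hH) !(ipDr hH) !(ipN hH) !(ipNr hH) !(ipvv hH).
  rewrite !rmorphD !rmorphM /=. 
  have -> : (2%:C : R[i]) = 2 by rewrite rmorphMn /= rmorph1.
  ring.
move: e; rewrite -rmorphD => /complexI e.
have h1 := hnorm_ge0 ip (x + y); have h2 := hnorm_ge0 ip (x - y).
have h3 := hnorm_ge0 ip x; have h4 := hnorm_ge0 ip y.
nra.
Qed.
Lemma bnd_sum (R : realType) (H : lmodType R[i]) (ip : H -> H -> R[i])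
  (hH : is_hilbert ip) n (f : 'I_n -> H -> H) :
  (forall i, exists M : R, forall x, hnorm ip (f i x) <= M * hnorm ip x) ->
  exists M : R, forall x, hnorm ip (\sum_(i < n) f i x) <= M * hnorm ip x.
Proof.
elim: n f => [|n IH] f hf.
  by exists 0 => x; rewrite big_ord0 (hn0 hH) mul0r.
have [M1 h1] := IH (fun i => f (widen_ord (leqnSn n) i)) (fun i => hf _).
have [M2 h2] := hf ord_max.
exists (2 * (M1 + M2)) => x; rewrite big_ord_recr /=.
have := hnD hH (\sum_(i < n) f (widen_ord (leqnSn n) i) x) (f ord_max x).
have := h1 x; have := h2 x. lra.
Qed.

Lemma hconvD (R : realType) (H : lmodType R[i]) (ip : H -> H -> R[i])
  (hH : is_hilbert ip) u v a b :
  hconv ip u a -> hconv ip v b -> hconv ip (fun n => u n + v n) (a + b).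
Proof.
move=> hu hv e e0.
have e4 : 0 < e / 4 by rewrite divr_gt0.
have [N1 h1] := hu _ e4; have [N2 h2] := hv _ e4.
exists (maxn N1 N2) => n hn.
have h1n := h1 n (leq_trans (leq_maxl _ _) hn).
have h2n := h2 n (leq_trans (leq_maxr _ _) hn).
have -> : u n + v n - (a + b) = (u n - a) + (v n - b) by rewrite opprD addrACA.
have := hnD hH (u n - a) (v n - b). lra.
Qed.

Lemma hconvZ (R : realType) (H : lmodType R[i]) (ip : H -> H -> R[i])
  (hH : is_hilbert ip) (l : R) u a :
  hconv ip u a -> hconv ip (fun n => l%:C *: u n) (l%:C *: a).
Proof.
move=> hu e e0.
have e1 : 0 < e / (`|l| + 1) by rewrite divr_gt0 // ltr_wpDl.
have [N h] := hu _ e1.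
exists N => n hn.
rewrite -scalerBr (hnZ hH).
have := h n hn; have := hnorm_ge0 ip (u n - a); have := normr_ge0 l.
set t := hnorm _ _ => ha ht hlt.
have : (`|l| + 1) * t < e.
  by rewrite -ltr_pdivlMl ?ltr_wpDl // mulrC.
nra.
Qed.

Lemma hconv_sum (R : realType) (H : lmodType R[i]) (ip : H -> H -> R[i])
  (hH : is_hilbert ip) n (u : 'I_n -> nat -> H) (a : 'I_n -> H) :
  (forall i, hconv ip (u i) (a i)) ->
  hconv ip (fun N => \sum_(i < n) u i N) (\sum_(i < n) a i).
Proof.
elim: n u a => [|n IH] u a hu.
  move=> e e0; exists 0%N => N _.
  by rewrite !big_ord0 subrr (hn0 hH).
have h1 := IH (fun i => u (widen_ord (leqnSn n) i)) (fun i => a (widen_ord (leqnSn n) i)) (fun i => hu _).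
have := hconvD hH h1 (hu ord_max).
have -> : (fun N => \sum_(i < n.+1) u i N) = (fun N => \sum_(i < n) u (widen_ord (leqnSn n) i) N + u ord_max N).
  by apply: funext => N; rewrite big_ord_recr.
by rewrite big_ord_recr.
Qed.
Lemma ip_suml (R : realType) (H : lmodType R[i]) (ip : H -> H -> R[i])
  (hH : is_hilbert ip) n (g : 'I_n -> H) y :
  ip (\sum_(i < n) g i) y = \sum_(i < n) ip (g i) y.
Proof. exact: (big_morph (fun v => ip v y) (fun a b => ipD hH a b y) (ip0l hH y)). Qed.

Lemma ip_sumr (R : realType) (H : lmodType R[i]) (ip : H -> H -> R[i])
  (hH : is_hilbert ip) n (g : 'I_n -> H) y :
  ip y (\sum_(i < n) g i) = \sum_(i < n) ip y (g i).
Proof.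
rewrite (ip_conj hH) ip_suml // rmorph_sum /=.
by apply: eq_bigr => i _; rewrite -(ip_conj hH).
Qed.

Lemma opsum_sob (R : realType) (H : lmodType R[i]) (ip : H -> H -> R[i])
  (hH : is_hilbert ip) (d : measure_display) (Omega : measurableType d)
  n (A : 'I_n -> opfun H Omega) (l : 'I_n -> R) :
  (forall i, is_sob ip (A i)) -> (forall i, 0 <= l i) -> \sum_(i < n) l i <= 1 ->
  is_sob ip (opsum l A).
Proof.
move=> hA hl hs; split.
  move=> E; split; [split|split; [|split]].
  - move=> c x y; rewrite /opsum /= scaler_sumr -big_split /=.
    apply: eq_bigr => i _.
    have [[lin _] _] := (hA i).1 E.
    by rewrite lin scalerDr !scalerA mulrC.
  - apply: (bnd_sum hH (f := fun i x => (l i)%:C *: A i E x)) => i.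
    have [[_ [M hM]] _] := (hA i).1 E.
    exists (`|l i| * M) => x; rewrite (hnZ hH) -mulrA.
    by apply: ler_wpM2l; [exact: normr_ge0 | exact: hM].
  - move=> x y; rewrite /opsum /= (ip_suml hH) (ip_sumr hH).
    apply: eq_bigr => i _.
    have [_ [sa _]] := (hA i).1 E.
    by rewrite (ipZ hH) (ipZr hH) conjc_real sa.
  - move=> x; rewrite /opsum /= (ip_suml hH); apply: sumr_ge0 => i _.
    have [_ [_ [pos _]]] := (hA i).1 E.
    by rewrite (ipZ hH) mulr_ge0 // ler0c.
  - move=> x; rewrite /opsum /= (ipD hH) (ipN hH) (ip_suml hH) subr_ge0.
    apply: (@le_trans _ _ (\sum_(i < n) (l i)%:C * ip x x)).
      apply: ler_sum => i _.
      have [_ [_ [_ up]]] := (hA i).1 E.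
      move: (up x); rewrite (ipD hH) (ipN hH) subr_ge0 => h.
      by rewrite (ipZ hH) ler_wpM2l // ler0c.
    rewrite -mulr_suml -rmorph_sum /=; apply: ler_piMl; first exact: ip_ge0.
    by rewrite -(rmorph1 (real_complex R)) lecR.
move=> F G htriv hG x.
have -> : (fun N => \sum_(k < N) opsum l A (F k) x) =
  (fun N => \sum_(i < n) (l i)%:C *: \sum_(k < N) A i (F k) x).
  apply: funext => N; rewrite /opsum exchange_big /=.
  by apply: eq_bigr => i _; rewrite scaler_sumr.
apply: hconv_sum => // i.
apply: hconvZ => //.
exact: (hA i).2.
Qed.
Unset Implicit Arguments. Set Strict Implicit.
Local Close Scope complex_scope.

Theorem theorem3p5 (R : realType) (H : lmodType R[i]) (ip : H -> H -> R[i])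
  (hH : is_hilbert ip) (d : measure_display) (Omega : measurableType d)
  (U : set (opfun H Omega)) :
  sob_effect_algebra ip U ->
  (convex_sob U <->
   (forall (A : opfun H Omega) (l : R), U A -> 0 <= l <= 1 -> U (opscale l A))).
Proof.
move=> [Usob [[Z [UZ [obsZ UZsub]]] Uadd]].
have U0 : U (opsub Z Z) by exact: UZsub.
have e0 : opsub Z Z = (fun E x => 0).
  by apply: funext => E; apply: funext => x; rewrite /opsub subrr.
split.
  move=> hc A l UA /andP[l0 l1].
  pose A2 := fun i : 'I_2 => if i == ord0 then A else opsub Z Z.
  pose l2 := fun i : 'I_2 => if i == ord0 then l else 1 - l.
  have -> : opscale l A = opsum l2 A2.
    apply: funext => E; apply: funext => x.
    rewrite /opsum /opscale !big_ord_recl big_ord0 /= /A2 /l2 /= e0.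
    by rewrite scaler0 !addr0.
  apply: hc.
  - by move=> i; rewrite /A2; case: (i == ord0).
  - move=> i; rewrite /l2; case: (i == ord0); apply/andP; split; lra.
  - by rewrite !big_ord_recl big_ord0 /l2 /=; lra.
move=> hs n A l hA hl hsum.
suff : forall n (A : 'I_n -> opfun H Omega) (l : 'I_n -> R),
    (forall i, U (A i)) -> (forall i, 0 <= l i <= 1) -> \sum_(i < n) l i <= 1 ->
    U (opsum l A).
  by move=> /(_ n A l hA hl); apply; rewrite hsum.
clear n A l hA hl hsum.
elim=> [|n IH] A l hA hl hsum.
  have -> : opsum l A = opsub Z Z.
    rewrite e0; apply: funext => E; apply: funext => x.
    by rewrite /opsum big_ord0.
  exact: U0.
have hl' : forall i, 0 <= l i by move=> i; have /andP[] := hl i.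
have hsum' : \sum_(i < n) l (widen_ord (leqnSn n) i) <= 1.
  move: hsum; rewrite big_ord_recr /=; have := hl' ord_max; lra.
have e : opsum l A = opadd (opsum (fun i => l (widen_ord (leqnSn n) i))
                                   (fun i => A (widen_ord (leqnSn n) i)))
                           (opscale (l ord_max) (A ord_max)).
  apply: funext => E; apply: funext => x.
  by rewrite /opsum /opadd /opscale big_ord_recr.
rewrite e; apply: Uadd.
- by apply: IH.
- by apply: hs.
- rewrite -e; apply: (opsum_sob hH) => //.
  by move=> i; apply: Usob.
Qed.
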